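(* There are absolute constants $c,c_1,c_2>0$ such that the following holds. Let $X,Y$ be a section-pair in which each vertex of $X$ is incident to at most one chord. Let $E$ be a set of chords and let $J\subseteq\mathbb{N}$ be an interval such that the length of every chord in $E$ belongs to $J$. Then there are $k\ge c|E|/|J|$ paths $P_1,\dots,P_k$ in $H(X,Y)$ between $x^{t}$ and $y^{t}$ such that $c_1|J|\le |P_{i+1}|-|P_i|\le c_2|J|$ for every $1\le i\le k-1$.
   Context: A section-pair in a graph $G$ is a pair $X,Y$ of vertex-disjoint paths; the two endpoints of $X$ are designated its top $x^{t}$ and bottom $x^{b}$, and those of $Y$ its top $y^t$ and bottom $y^b$. A chord is an edge of $G$ with one endpoint in $X$ and one in $Y$. $H(X,Y)$ is the graph with vertex set $V(X)\cup V(Y)$ whose edges are the edges of $X$, the edges of $Y$ and the chords. $|P|$ is the number of edges of a path $P$; $d_X(x_1,x_2)$ is the number of edges of the subpath of $X$ between $x_1,x_2$, similarly $d_Y$. The length of a chord $(x,y)$, $x\in X,y\in Y$, is $d_X(x^t,x)+d_Y(y^t,y)$. An interval is a set of consecutive integers and $|J|$ is its number of elements. *)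

(* Defs.v *)
From HB Require Import structures.
From mathcomp Require Import all_boot all_order all_algebra.
From mathcomp Require Import reals.
Set Implicit Arguments. Unset Strict Implicit. Unset Printing Implicit Defensive.

Section Defs.
Variable T : finType.

Definition simple_graph (e : rel T) : Prop := symmetric e /\ irreflexive e.

Definition is_path (adj : rel T) (P : seq T) : bool :=
  match P with
  | [::] => false
  | x :: p => path adj x p && uniq P
  end.

Definition plen (P : seq T) : nat := (size P).-1.

Definition seq_edge (s : seq T) (u v : T) : bool :=
  has (fun i => ((nth u s i == u) && (nth u s i.+1 == v)) ||
                ((nth u s i == v) && (nth u s i.+1 == u)))
      (iota 0 (size s).-1).

(* A section-pair X, Y in the graph e: vertex-disjoint paths; each path is
   listed from its top (head) to its bottom (last). *)
Definition section_pair (e : rel T) (X Y : seq T) : Prop :=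
  is_path e X /\ is_path e Y /\ [disjoint X & Y].

Definition chord (e : rel T) (X Y : seq T) (p : T * T) : bool :=
  [&& p.1 \in X, p.2 \in Y & e p.1 p.2].

Definition Hadj (e : rel T) (X Y : seq T) (u v : T) : bool :=
  [|| seq_edge X u v, seq_edge Y u v, chord e X Y (u, v) | chord e X Y (v, u)].

(* length of a chord (x,y): d_X(x^t,x) + d_Y(y^t,y) *)
Definition chord_length (X Y : seq T) (p : T * T) : nat :=
  index p.1 X + index p.2 Y.

End Defs.

(* Main.v *)
Require Import Defs.
From HB Require Import structures.
From mathcomp Require Import all_boot all_order all_algebra.
From mathcomp Require Import reals.
From mathcomp Require Import zify lra.
Import Order.TTheory GRing.Theory Num.Theory.

Set Implicit Arguments. Unset Strict Implicit. Unset Printing Implicit Defensive.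

Fixpoint downto (t k : nat) : seq nat :=
  if k is k'.+1 then t :: downto t.-1 k' else [::].

Lemma size_downto t k : size (downto t k) = k.
Proof. by elim: k t => [|k IH] t //=; rewrite IH. Qed.

Lemma mem_downto k t m : k <= t.+1 -> m \in downto t k -> (m <= t) && (t < m + k).
Proof.
elim: k t => [|k IH] t //= hk; rewrite inE => /orP [/eqP -> | hm]; first by lia.
have := IH t.-1; rewrite hm; move=> /(_ _ isT) h.
have {}h : (m <= t.-1) && (t.-1 < m + k) by apply: h; lia.
lia.
Qed.

Lemma uniq_downto k t : k <= t.+1 -> uniq (downto t k).
Proof.
elim: k t => [|k IH] t //= hk; apply/andP; split; last by apply: IH; lia.
apply/negP => /(mem_downto _) h.
have : (t <= t.-1) && (t.-1 < t + k) by apply: h; lia.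
lia.
Qed.

Lemma last_iotaS x m k : last x (iota m k.+1) = m + k.
Proof.
elim: k m x => [|k IH] m x /=; first by rewrite addn0.
by have := IH m.+1 x; rewrite /= => ->; lia.
Qed.

Lemma last_downtoS x t k : k <= t -> last x (downto t k.+1) = t - k.
Proof.
elim: k t x => [|k IH] t x /= hk; first by rewrite subn0.
by have := IH t.-1 x; rewrite /= => ->; lia.
Qed.

Lemma uniq3 (A : eqType) (XS YS Z : seq A) : uniq XS -> uniq YS -> uniq Z ->
  (forall p, p \in XS -> p \notin YS) -> (forall p, p \in XS -> p \notin Z) ->
  (forall p, p \in YS -> p \notin Z) -> uniq (XS ++ YS ++ Z).
Proof.
move=> u1 u2 u3 h12 h13 h23; rewrite !cat_uniq u1 u2 u3 /= andbT.
apply/andP; split; apply/hasPn => p.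
- rewrite mem_cat => /orP [] hp; apply/negP => hx.
    by move: (h12 _ hx); rewrite hp.
  by move: (h13 _ hx); rewrite hp.
- by move=> hp; apply/negP => hx; move: (h23 _ hx); rewrite hp.
Qed.

Lemma memXseg s k p : p \in inl s :: [seq (@inl nat nat) i | i <- iota s.+1 k] ->
  exists2 i, p = inl i & s <= i <= s + k.
Proof.
rewrite inE => /orP [/eqP -> | /mapP [i hi ->]]; first by exists s => //; lia.
by exists i => //; move: hi; rewrite mem_iota; lia.
Qed.

Lemma memYseg t k p : k <= t -> p \in inr t :: [seq (@inr nat nat) i | i <- downto t.-1 k] ->
  exists2 j, p = inr j & t - k <= j <= t.
Proof.
move=> hk; rewrite inE => /orP [/eqP -> | /mapP [j hj ->]]; first by exists t => //; lia.
exists j => //; have := mem_downto (k:=k) (t:=t.-1) (m:=j).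
rewrite hj; move=> /(_ _ isT) h; have {}h : (j <= t.-1) && (t.-1 < j + k) by apply: h; lia.
lia.
Qed.

Lemma uniqXseg s k : uniq (inl s :: [seq (@inl nat nat) i | i <- iota s.+1 k]).
Proof.
have -> : inl s :: [seq (@inl nat nat) i | i <- iota s.+1 k] = [seq inl i | i <- iota s k.+1] by [].
by rewrite map_inj_uniq ?iota_uniq // => x y [].
Qed.

Lemma uniqYseg t k : k <= t -> uniq (inr t :: [seq (@inr nat nat) i | i <- downto t.-1 k]).
Proof.
move=> hk.
have -> : inr t :: [seq (@inr nat nat) i | i <- downto t.-1 k] = [seq inr i | i <- downto t k.+1] by [].
rewrite map_inj_uniq; first by apply: uniq_downto; lia.
by move=> x y [].
Qed.

Lemma lastXseg x s k : last x (inl s :: [seq (@inl nat nat) i | i <- iota s.+1 k]) = inl (s + k).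
Proof.
have -> : last x (inl s :: [seq (@inl nat nat) i | i <- iota s.+1 k]) =
  inl (last s (iota s.+1 k)) by exact: (last_map inl (iota s.+1 k) s).
case: k => [|k]; first by rewrite /= addn0.
by rewrite last_iotaS; congr inl; lia.
Qed.

Lemma lastYseg x t k : k <= t -> last x (inr t :: [seq (@inr nat nat) i | i <- downto t.-1 k]) = inr (t - k).
Proof.
move=> hk.
have -> : last x (inr t :: [seq (@inr nat nat) i | i <- downto t.-1 k]) =
  inr (last t (downto t.-1 k)) by exact: (last_map inr (downto t.-1 k) t).
case: k hk => [|k] hk; first by rewrite /= subn0.
have -> : last t (downto t.-1 k.+1) = last t (downto t k.+2) by [].
rewrite last_downtoS; last by lia.
congr inr; lia.
Qed.

Lemma lastXseg' s k : last (inl s) [seq (@inl nat nat) i | i <- iota s.+1 k] = inl (s + k).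
Proof. exact: (lastXseg (inl s) s k). Qed.

Lemma lastYseg' t k : k <= t -> last (inr t) [seq (@inr nat nat) i | i <- downto t.-1 k] = inr (t - k).
Proof. exact: (lastYseg (inr t)). Qed.

Section Zig.
Variables (T : finType) (e : rel T) (X Y : seq T) (xt yt : T).

Definition vtx (p : nat + nat) : T :=
  match p with inl i => nth xt X i | inr j => nth yt Y j end.

Definition Rpos (u v : nat + nat) : bool :=
  match u, v with
  | inl k, inl k' => (k' == k.+1) && (k.+1 < size X)
  | inr k, inr k' => (k == k'.+1) && (k < size Y)
  | inl i, inr j => [&& i < size X, j < size Y & e (nth xt X i) (nth yt Y j)]
  | inr j, inl i => [&& i < size X, j < size Y & e (nth xt X i) (nth yt Y j)]
  end.

Lemma Rpos_Hadj u v : Rpos u v -> Hadj e X Y (vtx u) (vtx v).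
Proof.
rewrite /Hadj /seq_edge /chord.
case: u => [k|k]; case: v => [k'|k'] /=.
- case/andP=> /eqP -> hk; apply/orP; left; apply/hasP; exists k.
    by rewrite mem_iota; lia.
  apply/orP; left.
  by rewrite (set_nth_default xt) ?(set_nth_default xt _ hk) ?eqxx //; lia.
- case/and3P=> h1 h2 h3; apply/or4P; apply: Or43.
  by rewrite /= mem_nth // mem_nth.
- case/and3P=> h1 h2 h3; apply/or4P; apply: Or44.
  by rewrite /= mem_nth // mem_nth.
- case/andP=> /eqP -> hk; apply/orP; right; apply/orP; left; apply/hasP; exists k'.
    by rewrite mem_iota; lia.
  apply/orP; right.
  by rewrite (set_nth_default yt) ?(set_nth_default yt _ hk) ?eqxx //; lia.
Qed.

Lemma path_iotaX k s : s + k < size X ->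
  path Rpos (inl s) [seq inl i | i <- iota s.+1 k].
Proof.
elim: k s => [|k IH] s //= h; apply/andP; split; first by rewrite eqxx; lia.
by apply: IH; lia.
Qed.

Lemma path_downY k t : k <= t -> t < size Y ->
  path Rpos (inr t) [seq inr i | i <- downto t.-1 k].
Proof.
elim: k t => [|k IH] t //= h1 h2; apply/andP; split; first by apply/andP; split => //; apply/eqP; lia.
by apply: IH; lia.
Qed.


Variables (ix jx : nat -> nat) (mu : nat).

Fixpoint zz (s : nat) (F : seq nat) : seq (nat + nat) :=
  match F with
  | [::] => inl s :: [seq inl i | i <- iota s.+1 (ix mu - s)] ++
            inr (jx mu) :: [seq inr i | i <- downto (jx mu).-1 (jx mu)]
  | t :: F' => inl s :: [seq inl i | i <- iota s.+1 (ix t - s)] ++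
            inr (jx t) :: [seq inr i | i <- downto (jx t).-1 (jx t - jx t.+1)] ++
            zz (ix t.+1) F'
  end.

Definition Rr (t t' : nat) : bool := (t.+1 < t') && (jx t' < jx t.+1).
Definition Gd (t : nat) : bool := [&& t.+1 < mu, jx mu < jx t.+1 & jx t.+1 < jx t].

Definition gz (t : nat) : int := ((ix t + jx t)%:Z - (ix t.+1 + jx t.+1)%:Z + 2)%R.

Hypothesis Hpt : forall t, t <= mu ->
  [&& ix t < size X, jx t < size Y & e (nth xt X (ix t)) (nth yt Y (jx t))].
Hypothesis Hinc : forall t t', t < t' <= mu -> ix t < ix t'.

Lemma zz_main F : forall s, sorted Rr F -> all Gd F -> s <= ix (head mu F) ->
  [/\ path Rpos (inl s) (behead (zz s F)),
      head (inl 0) (zz s F) = inl s,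
      last (inl 0) (zz s F) = inr 0,
      uniq (zz s F) & [/\
      (forall i : nat, inl i \in zz s F -> s <= i <= ix mu),
      (forall j : nat, inr j \in zz s F -> j <= jx (head mu F)) &
      ((size (zz s F))%:Z = (ix mu + jx mu + 2)%:Z - s%:Z + \sum_(t <- F) gz t)%R]].
Proof.
elim: F => [|t F IH] s hsort hall hs.
- have /and3P [hx hy he] := Hpt (leqnn mu).
  have hk : s + (ix mu - s) = ix mu by simpl in hs; lia.
  split.
  + rewrite /= cat_path path_iotaX; last by lia.
    rewrite lastXseg' hk /= hx hy he /=.
    by apply: path_downY.
  + by [].
  + rewrite [zz _ _]/= [last _ (_ :: _)]/= last_cat lastYseg //; congr inr; lia.
  + rewrite [zz _ _]/= -cat_cons cat_uniq uniqXseg uniqYseg // andbT.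
    apply/hasPn => p hp; apply/negP => hp'.
    have [j hj _] := memYseg (leqnn _) hp.
    by have [i] := memXseg hp'; rewrite hj.
  + split.
    * move=> i; rewrite [zz _ _]/= -cat_cons mem_cat => /orP [/memXseg [i' [->] h] | /memYseg]; first by lia.
      by move=> /(_ (leqnn _)) [j].
    * move=> j; rewrite [zz _ _]/= -cat_cons mem_cat => /orP [/memXseg [i' hi _] | /memYseg]; first by [].
      by move=> /(_ (leqnn _)) [j' [->] h] /=; lia.
    * rewrite /= big_nil size_cat /= size_map size_iota size_map size_downto; lia.
- move: hall => /andP [hgt hall].
  move: hgt; rewrite /Gd => /and3P [ht1 hjmu hjt].
  have /and3P [hx hy he] := Hpt (ltnW (ltnW ht1)).
  have /and3P [hx1 hy1 he1] := Hpt (ltnW ht1).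
  have hsortF : sorted Rr F by move: hsort; case: (F) => //= t' F' /andP [].
  have hs' : ix t.+1 <= ix (head mu F).
    case: (F) hsort hall => [|t' F'] /=.
      by move=> _ _; apply: ltnW; apply: Hinc; lia.
    move=> /andP [/andP [h1 h2] _] /andP [/and3P [h3 _ _] _].
    by apply: ltnW; apply: Hinc; lia.
  have hjh : jx (head mu F) < jx t.+1.
    case: (F) hsort hall => [|t' F'] /=; first by [].
    by move=> /andP [/andP [h1 h2] _].
  have hs0 : s <= ix t by [].
  have hst : ix t < ix t.+1 by apply: Hinc; lia.
  have [IHp IHh IHl IHu [IHmx IHmy IHs]] := IH _ hsortF hall hs'.
  have hk : s + (ix t - s) = ix t by lia.
  have hZ : zz (ix t.+1) F = inl (ix t.+1) :: behead (zz (ix t.+1) F).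
    move: IHh; case E: (zz _ F) => [|z Z'] /=; last by move=> ->.
    by move: E; case: (F).
  have zc : zz s (t :: F) = (inl s :: [seq inl i | i <- iota s.+1 (ix t - s)]) ++
        (inr (jx t) :: [seq inr i | i <- downto (jx t).-1 (jx t - jx t.+1)]) ++
        zz (ix t.+1) F by [].
  split.
  + rewrite /= cat_path path_iotaX; last by lia.
    rewrite lastXseg' hk /= hx hy he /= cat_path path_downY //; last by lia.
    rewrite lastYseg'; last by lia.
    have -> : jx t - (jx t - jx t.+1) = jx t.+1 by lia.
    by rewrite hZ /= hx1 hy1 he1.
  + by [].
  + rewrite /= last_cat /= last_cat.
    by move: IHl; rewrite hZ.
  + change (uniq ((inl s :: [seq inl i | i <- iota s.+1 (ix t - s)]) ++
        (inr (jx t) :: [seq inr i | i <- downto (jx t).-1 (jx t - jx t.+1)]) ++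
        zz (ix t.+1) F)).
    apply: uniq3 => //; first exact: uniqXseg.
    * apply: uniqYseg; lia.
    * by move=> p /memXseg [i ->] _; apply/negP => /memYseg => /(_ (leq_subr _ _)) [j].
    * move=> p /memXseg [i -> hi]; apply/negP => /IHmx; lia.
    * move=> p /memYseg => /(_ (leq_subr _ _)) [j -> hj]; apply/negP => /IHmy; lia.
  + split.
    * move=> i; rewrite zc mem_cat => /orP [/memXseg [i' [->] h] | ].
        have : ix t.+1 < ix mu by apply: Hinc; lia.
        lia.
      rewrite mem_cat => /orP [/memYseg | /IHmx]; last by lia.
      by move=> /(_ (leq_subr _ _)) [j].
    * move=> j; rewrite zc mem_cat => /orP [/memXseg [i' hi _] | ]; first by [].
      rewrite mem_cat => /orP [/memYseg | /IHmy h]; last by rewrite /=; lia.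
      by move=> /(_ (leq_subr _ _)) [j' [->] h] /=; lia.
    * rewrite zc big_cons !size_cat /= !size_map size_iota size_downto.
      move: IHs; move: (\sum_(t0 <- F) gz t0)%R => S; rewrite /gz; lia.
Qed.

Lemma zz_path F : sorted Rr F -> all Gd F -> uniq X -> uniq Y ->
  (forall x, x \in X -> x \notin Y) -> head xt X = xt -> head yt Y = yt ->
  [&& is_path (Hadj e X Y) (map vtx (zz 0 F)), head xt (map vtx (zz 0 F)) == xt
    & last xt (map vtx (zz 0 F)) == yt] /\
  ((plen (map vtx (zz 0 F)))%:Z = (ix mu + jx mu + 1)%:Z + \sum_(t <- F) gz t)%R.
Proof.
move=> hsort hall uX uY dXY hX hY.
have [hp hh hl hu [hmx hmy hs]] := zz_main hsort hall (leq0n _).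
have hne : zz 0 F = inl 0 :: behead (zz 0 F).
  move: hh; case E: (zz 0 F) => [|z Z'] /=; last by move=> ->.
  by move: E; case: (F).
have hmuX : ix mu < size X by have /and3P [] := Hpt (leqnn mu).
have hjY : jx (head mu F) < size Y.
  case: (F) hall => [|t F'] /=; first by have /and3P [] := Hpt (leqnn mu).
  by move=> /andP [/and3P [h1 _ _] _]; have /and3P [] := Hpt (ltnW (ltnW h1)).
have lt1 : forall k : nat, 0 <= k <= ix mu -> k < size X.
  by move=> k /andP [_ hk]; exact: leq_ltn_trans hk hmuX.
have lt2 : forall k : nat, k <= jx (head mu F) -> k < size Y.
  by move=> k hk; exact: leq_ltn_trans hk hjY.
have hinj : {in zz 0 F &, injective vtx}.
  move=> u v; case: u => [i|j]; case: v => [i'|j'] hu' hv' /=.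
  - move=> h; have h1 := lt1 _ (hmx _ hu'); have h2 := lt1 _ (hmx _ hv').
    by congr inl; apply/eqP; rewrite -(nth_uniq xt _ _ uX) ?h.
  - move=> h; have : nth xt X i \in X by apply: mem_nth; exact: lt1 _ (hmx _ hu').
    by move/dXY; rewrite h mem_nth //; exact: lt2 _ (hmy _ hv').
  - move=> h; have : nth xt X i' \in X by apply: mem_nth; exact: lt1 _ (hmx _ hv').
    by move/dXY; rewrite -h mem_nth //; exact: lt2 _ (hmy _ hu').
  - move=> h; have h1 := lt2 _ (hmy _ hu'); have h2 := lt2 _ (hmy _ hv').
    by congr inr; apply/eqP; rewrite -(nth_uniq yt _ _ uY) ?h.
split.
  apply/and3P; split.
  - have e1 : map vtx (zz 0 F) = vtx (inl 0) :: map vtx (behead (zz 0 F)) by rewrite {1}hne.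
    have hU : uniq (map vtx (zz 0 F)) by rewrite map_inj_in_uniq.
    rewrite e1 in hU *; apply/andP; split => //.
    rewrite path_map; apply: (sub_path _ hp) => u v /Rpos_Hadj.
    by [].
  - by rewrite hne /= nth0 hX.
  - have -> : last xt (map vtx (zz 0 F)) = vtx (last (inl 0) (zz 0 F)).
      by rewrite hne; exact: (last_map vtx _ (inl 0)).
    by rewrite hl /= nth0 hY.
rewrite /plen size_map.
move: hs; rewrite hne /=; move: (\sum_(t0 <- F) gz t0)%R => S; lia.
Qed.

End Zig.

Lemma sorted_rcons (A : eqType) (R : rel A) s x :
  sorted R s -> (forall y, last y s \in s -> R (last y s) x) -> sorted R (rcons s x).
Proof.
case: s => //= y s; rewrite rcons_path => -> /= h; apply: (h y).
exact: mem_last.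
Qed.

Lemma sum_filter_pos (s : seq nat) (f : nat -> int) :
  (\sum_(i <- s) f i <= \sum_(i <- [seq t <- s | 0 < f t]%R) f i)%R.
Proof.
elim: s => [|x s IH] /=; first by rewrite !big_nil.
rewrite big_cons; case: ifP => hx; rewrite ?big_cons.
  move: IH hx; move: (\sum_(i <- s) f i)%R (\sum_(i <- [seq t <- s | 0 < f t]%R) f i)%R (f x) => A B C.
  lia.
move: IH (negbT hx); move: (\sum_(i <- s) f i)%R (\sum_(i <- [seq t <- s | 0 < f t]%R) f i)%R (f x) => A B C.
lia.
Qed.

Lemma sum_rcons (s : seq nat) x (f : nat -> int) :
  (\sum_(i <- rcons s x) f i = \sum_(i <- s) f i + f x)%R.
Proof. by rewrite -cats1 big_cat big_seq1. Qed.

Section Comb.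
Variables (n a b : nat) (ix jx : nat -> nat).
Hypothesis Hinc : forall t t', t < t' < n -> ix t < ix t'.
Hypothesis HL : forall t, t < n -> a <= ix t + jx t <= b.

Definition down t := (t.+1 < n) && (jx t.+1 < jx t).
Definition Rd t t' := [&& down t, down t', t.+1 < t' & jx t' < jx t.+1].
Local Notation g := (gz ix jx).

Lemma ix_gap t t' : t <= t' < n -> t' - t <= ix t' - ix t.
Proof.
elim: t' => [|t' IH] h; first by lia.
case: (leqP t t') => ht; last by lia.
have h1 : t <= t' < n by lia.
have h2 : t' < t'.+1 < n by lia.
case: (ltnP t t') => ht'.
  by have := IH h1; have := Hinc h2; lia.
have -> : t = t' by lia.
by have := Hinc h2; lia.
Qed.

Lemma ix_gapZ t t' : t <= t' < n -> (t'%:Z - t%:Z <= (ix t')%:Z - (ix t)%:Z)%R.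
Proof.
move=> h; case: (ltnP t t') => h'.
  have h2 : t < t' < n by lia.
  by have := ix_gap h; have := Hinc h2; lia.
have -> : t' = t by lia.
lia.
Qed.

Lemma Rd_trans : transitive Rd.
Proof.
move=> y x z /and4P [h1 h2 h3 h4] /and4P [h5 h6 h7 h8]; apply/and4P; split => //; first by lia.
by move: h2 => /andP [_ h2]; lia.
Qed.

Lemma main_ind tau : down tau -> exists F0 G : seq nat,
  [/\ sorted Rd (rcons F0 tau), sorted Rd G, all down (rcons F0 tau), all down G &
      all (fun s => s < tau) F0 && all (fun s => s < tau) G] /\
  (\sum_(s <- F0) g s + g tau + \sum_(s <- G) g s + (ix tau.+1 + jx tau.+1)%:Z >=
    tau%:Z + (2 * a + 2)%:Z - b%:Z)%R.
Proof.
elim/ltn_ind: tau => tau IH hd.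
have /andP [htn hjt] := hd.
have htau_n : tau < n by lia.
case: (leqP (jx 0) (jx tau)) => hj0.
  exists [::], [::]; split.
    by split => //=; rewrite hd.
  rewrite !big_nil /gz.
  have hg : 0 <= tau < n by lia.
  have := ix_gapZ hg; have := HL htau_n; have h0 : 0 < n by lia.
  have := HL h0; lia.
have tau0 : 0 < tau by case: (tau) hj0 => //; lia.
have ex : exists t, jx t.+1 <= jx tau by exists tau.-1; rewrite prednK.
case: (ex_minnP ex) => tp htp hmin.
have htp_lt : tp < tau by have := hmin tau.-1; rewrite prednK // leqnn; lia.
have hbelow : forall m, m < tp -> jx tau < jx m.+1.
  by move=> m hm; rewrite ltnNge; apply/negP => /hmin; lia.
have hdp : down tp.
  apply/andP; split; first by lia.
  case: (tp) htp hbelow => [|tq] h1 h2; first by lia.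
  by have := h2 tq (leqnn _); lia.
have [F0 [G [[s1 s2 a1 a2 /andP [b1 b2]] hsum]]] := IH tp htp_lt hdp.
exists G, (rcons F0 tp); split.
  split.
  - apply: sorted_rcons => // y hy.
    have hl : last y G < tp by move/allP: b2 => /(_ _ hy).
    apply/and4P; split.
    + by move/allP: a2 => /(_ _ hy).
    + exact: hd.
    + lia.
    + exact: hbelow.
  - exact: s1.
  - by rewrite all_rcons hd a2.
  - exact: a1.
  - rewrite all_rcons htp_lt /=; apply/andP; split.
      by apply: sub_all b2 => y /= hy; lia.
    by move: a1 b1; rewrite all_rcons => /andP [_ _]; apply: sub_all => y /= hy; lia.
rewrite sum_rcons.
have hg : tp.+1 <= tau < n by lia.
have := ix_gapZ hg.
move: hsum; rewrite /gz.
move: (\sum_(s <- F0) _)%R (\sum_(s <- G) _)%R => S1 S2.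
lia.
Qed.

End Comb.

Section Comb2.
Variables (n a b : nat) (ix jx : nat -> nat).
Hypothesis Hinc : forall t t', t < t' < n -> ix t < ix t'.
Hypothesis HL : forall t, t < n -> a <= ix t + jx t <= b.
Local Notation g := (gz ix jx).
Local Notation down := (down n jx).
Local Notation Rd := (Rd n jx).

Lemma exists_family : 0 < n -> exists mu F,
  [/\ mu < n, (forall t, t < mu -> jx mu < jx t), sorted (Rr jx) F, all (Gd jx mu) F &
   all (fun t => 0 < g t)%R F /\
   (n%:Z - 2 - 3 * (b%:Z - a%:Z) <= 2 * \sum_(t <- F) g t)%R].
Proof.
move=> n0.
have hab : a <= b by have := HL n0; lia.
have exv : exists v, has (fun t => jx t == v) (iota 0 n).
  by exists (jx 0); apply/hasP; exists 0; rewrite ?mem_iota //.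
case: (ex_minnP exv) => v /hasP [t0 ht0 /eqP hv] vmin.
have exm : exists m, (m < n) && (jx m == v).
  by exists t0; rewrite hv eqxx andbT; move: ht0; rewrite mem_iota.
case: (ex_minnP exm) => mu /andP [hmun /eqP hmu] mumin.
have hge : forall t, t < n -> jx mu <= jx t.
  move=> t ht; rewrite hmu; apply: vmin; apply/hasP; exists t => //; by rewrite mem_iota.
have hfirst : forall t, t < mu -> jx mu < jx t.
  move=> t ht; rewrite ltn_neqAle hge; last by lia.
  rewrite andbT; apply/negP => /eqP h.
  have : mu <= t by apply: mumin; rewrite -h hmu eqxx andbT; lia.
  lia.
have hafter : n - 1 - mu <= b - a.
  have hg : mu <= n.-1 < n by lia.
  have := ix_gapZ Hinc hg; have := hge n.-1 ltac:(lia); have := HL hmun; have := HL (t := n.-1) ltac:(lia).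
  lia.
exists mu.
case: (posnP mu) => hmu0.
  exists [::]; split => //; split => //; rewrite big_nil; move: hafter hab; rewrite hmu0; clear; lia.
have hd : down mu.-1 by rewrite /down prednK //; apply/andP; split => //; apply: hfirst; lia.
have [F0 [G [[s1 s2 a1 a2 /andP [b1 b2]] hsum]]] := main_ind Hinc HL hd.
have sF0 : sorted Rd F0 by apply: (subseq_sorted (@Rd_trans n jx) _ s1); exact: subseq_rcons.
have dF0 : all down F0 by move: a1; rewrite all_rcons => /andP [].
pose F1 := if (\sum_(t <- G) g t <= \sum_(t <- F0) g t)%R then F0 else G.
have sF1 : sorted Rd F1 by rewrite /F1; case: ifP.
have dF1 : all down F1 by rewrite /F1; case: ifP.
have lF1 : all (fun s => s < mu.-1) F1 by rewrite /F1; case: ifP.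
have hF1 : (\sum_(t <- F0) g t + \sum_(t <- G) g t <= 2 * \sum_(t <- F1) g t)%R.
  rewrite /F1; case: ifP => h; move: h;
    move: (\sum_(t <- F0) g t)%R (\sum_(t <- G) g t)%R => A B; clear; lia.
exists [seq t <- F1 | 0 < g t]%R; split => //.
- have hsub : subrel Rd (Rr jx) by move=> x y /and4P [_ _ h1 h2]; apply/andP.
  apply: (sub_sorted hsub).
  apply: sorted_filter => //; exact: Rd_trans.
- apply/allP => t; rewrite mem_filter => /andP [_ ht].
  have /andP [h1 h2] := allP dF1 _ ht; have h3 := allP lF1 _ ht.
  apply/and3P; split => //; first by move: h3 hmu0 hmun; clear; lia.
  by apply: hfirst; move: h3 hmu0; clear; lia.
- split; first by apply/allP => t; rewrite mem_filter => /andP [].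
  have hf := sum_filter_pos F1 g.
  have hL : a <= ix mu.-1 + jx mu.-1 <= b by apply: HL; move: hmun; clear; lia.
  move: hsum; rewrite /gz prednK // => hsum.
  move: hf hL hsum hF1 hafter hab hmu0.
  move: (\sum_(s <- F0) _)%R (\sum_(s <- G) _)%R (\sum_(s <- F1) _)%R
    (\sum_(s <- [seq t <- F1 | _]) _)%R => S1 S2 S3 S4.
  move: (ix mu.-1) (jx mu.-1) (ix mu) (jx mu) => i1 j1 i2 j2.
  clear; lia.
Qed.

End Comb2.

Lemma select_gen (h : nat -> int) (r w : nat) : 0 < w ->
  (forall k, k < r -> (1 <= h k.+1 - h k <= w%:Z + 1)%R) ->
  forall d k0, r - k0 = d -> k0 <= r -> exists ks : seq nat,
  [/\ head 0 ks = k0, all (fun k => k <= r) ks, 0 < size ks,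
      (forall i, i.+1 < size ks ->
         (w%:Z <= h (nth 0 ks i.+1) - h (nth 0 ks i) <= 2 * w%:Z)%R) &
      (h r - h k0 + w%:Z <= 2 * w%:Z * (size ks)%:Z)%R].
Proof.
move=> w0 hstep d; elim/ltn_ind: d => d IH k0 hd hk0.
case: (boolP (has (fun k => [&& k0 <= k, k <= r & (h k0 + w%:Z <= h k)%R]) (iota 0 r.+1))).
- move=> hex.
  have ex : exists k, [&& k0 <= k, k <= r & (h k0 + w%:Z <= h k)%R].
    by move/hasP: hex => [k _ hk]; exists k.
  case: (ex_minnP ex) => k1 /and3P [h1 h2 h3] hmin.
  have hk1 : k0 < k1.
    rewrite ltn_neqAle h1 andbT; apply/negP => /eqP e1; move: h3; rewrite -e1.
    by move: w0; clear; lia.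
  have hprev : (h k1.-1 < h k0 + w%:Z)%R.
    rewrite ltNge; apply/negP => hc.
    have : k1 <= k1.-1 by apply: hmin; rewrite hc andbT; apply/andP; split; move: hk1 h2; clear; lia.
    by move: hk1; clear; lia.
  have hs := hstep k1.-1 ltac:(move: hk1 h2; clear; lia).
  rewrite prednK in hs; last by move: hk1; clear; lia.
  have [ks1 [e1 a1 s1 g1 b1]] := IH (r - k1) ltac:(move: hk1 hd h2; clear; lia) k1 erefl h2.
  exists (k0 :: ks1); split => //.
  + by rewrite /= hk0 a1.
  + move=> i /=; case: i => [|i] hi /=.
      case: (ks1) e1 s1 => [|k ks'] //= -> _.
      by move: h3 hprev hs; clear; lia.
    by apply: g1.
  + move: b1 h3 hprev hs; move: (h r) (h k1) (h k0) (h k1.-1) => A B C D.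
    rewrite /=; clear; lia.
- move/hasPn => hno; exists [:: k0]; split => //=.
  + by rewrite hk0.
  + have := hno r; rewrite mem_iota add0n ltnSn leqnn hk0 /= => /(_ isT).
    by move: (h r) (h k0) => A B; clear; lia.
Qed.

Lemma real_gap (R : realType) (N1 N2 w : nat) : (N1 + w <= N2 <= N1 + 2 * w)%N ->
  (1 * (w%:R : R) <= (N2%:R : R) - N1%:R <= 2 * (w%:R : R))%R.
Proof.
move=> /andP [h1 h2].
have e1 : ((N1 + w)%:R <= N2%:R :> R)%R by rewrite ler_nat.
have e2 : (N2%:R <= (N1 + 2 * w)%:R :> R)%R by rewrite ler_nat.
rewrite !natrD in e1 e2.
apply/andP; split; lra.
Qed.

Lemma real_count (R : realType) (n w s : nat) : (n <= 8 * w * s)%N -> (0 < w)%N ->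
  (1 / 8 * n%:R / w%:R <= s%:R :> R)%R.
Proof.
move=> h hw.
have e1 : (n%:R <= 8 * (s%:R * w%:R) :> R)%R by rewrite -natrM -natrM ler_nat [(s * w)%N]mulnC mulnA.
have hw' : (0 < w%:R :> R)%R by rewrite ltr0n.
rewrite ler_pdivrMr //.
move: e1; move: (s%:R * w%:R)%R => P; lra.
Qed.

Lemma is_path_uniq (T : finType) (adj : rel T) P : is_path adj P -> uniq P.
Proof. by case: P => //= x p /andP []. Qed.

Section Main.
Variables (T : finType) (e : rel T) (X Y : seq T).
Variables (E : {set T * T}) (a b : nat) (xt yt : T).
Hypothesis uX : uniq X.
Hypothesis uY : uniq Y.
Hypothesis dXY : forall x, x \in X -> x \notin Y.
Hypothesis hone : forall x, x \in X -> (#|[set y | chord e X Y (x, y)]| <= 1)%N.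
Hypothesis hE : forall p, p \in E -> chord e X Y p.
Hypothesis hlen : forall p, p \in E -> (a <= chord_length X Y p <= b)%N.
Hypothesis hxt : head xt X = xt.
Hypothesis hyt : head yt Y = yt.
Hypothesis hab : a <= b.

Definition pts := sort (fun p q : T * T => index p.1 X <= index q.1 X) (enum E).
Definition ix t := index (nth (xt, yt) pts t).1 X.
Definition jx t := index (nth (xt, yt) pts t).2 Y.
Definition nE := size pts.

Lemma nE_card : nE = #|E|.
Proof. by rewrite /nE /pts size_sort cardE. Qed.

Lemma pts_mem t : t < nE -> nth (xt, yt) pts t \in E.
Proof. by move=> ht; have := mem_nth (xt, yt) ht; rewrite mem_sort mem_enum. Qed.

Lemma pts_chord t : t < nE -> [&& ix t < size X, jx t < size Y & e (nth xt X (ix t)) (nth yt Y (jx t))].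
Proof.
move=> /pts_mem /hE /and3P [h1 h2 h3].
by rewrite /ix /jx !index_mem h1 h2 !nth_index.
Qed.

Lemma pts_len t : t < nE -> a <= ix t + jx t <= b.
Proof. by move=> /pts_mem /hlen. Qed.

Lemma pts_inc t t' : t < t' < nE -> ix t < ix t'.
Proof.
move=> /andP [h1 h2].
have hs : sorted (fun p q : T * T => index p.1 X <= index q.1 X) pts.
  by apply: sort_sorted => p q; apply: leq_total.
have htr : transitive (fun p q : T * T => index p.1 X <= index q.1 X).
  by move=> y x z; apply: leq_trans.
have hle : ix t <= ix t'.
  have := sorted_ltn_nth htr (xt, yt) hs.
  by apply => //; rewrite inE /=; move: h1 h2; rewrite /nE; clear; lia.
rewrite ltn_neqAle hle andbT; apply/negP => /eqP heq.
have hp := pts_mem (ltn_trans h1 h2); have hq := pts_mem h2.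
set p := nth (xt, yt) pts t in hp heq; set q := nth (xt, yt) pts t' in hq heq.
have /and3P [hp1 hp2 hpe] := hE hp; have /and3P [hq1 hq2 hqe] := hE hq.
have e1 : p.1 = q.1 by rewrite -(nth_index xt hp1) -(nth_index xt hq1); congr nth.
have e2 : p.2 = q.2.
  have := hone hp1 => /card_le1_eqP; apply; rewrite inE.
    by rewrite /chord /= e1 hq1 hq2 hqe.
  by rewrite /chord /= hp1 hp2 hpe.
have epq : p = q by case: (p) (q) e1 e2 => ? ? [? ?] /= -> ->.
have uP : uniq pts by rewrite sort_uniq enum_uniq.
move: epq; rewrite /p /q => /eqP; rewrite nth_uniq //; first by move/eqP; lia.
by apply: ltn_trans h2.
Qed.

Lemma main_paths : exists Ps : seq (seq T),
  [/\ (#|E| <= 8 * (b - a).+1 * size Ps)%N,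
      (forall P, P \in Ps -> [&& is_path (Hadj e X Y) P, head xt P == xt & last xt P == yt]) &
      (forall i, i.+1 < size Ps ->
        (plen (nth [::] Ps i) + (b - a).+1 <= plen (nth [::] Ps i.+1) <=
         plen (nth [::] Ps i) + 2 * (b - a).+1)%N)].
Proof.
case: (posnP nE) => n0.
  by exists [::]; split => //; rewrite -nE_card n0.
have [mu [F [hmu hfirst hsort hall [hpos hbound]]]] := exists_family pts_inc pts_len n0.
have Hpt' : forall t, t <= mu ->
    [&& ix t < size X, jx t < size Y & e (nth xt X (ix t)) (nth yt Y (jx t))].
  by move=> t ht; apply: pts_chord; move: ht hmu; clear; lia.
have Hinc' : forall t t', t < t' <= mu -> ix t < ix t'.
  by move=> t t' ht; apply: pts_inc; move: ht hmu; clear; lia.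
pose w := (b - a).+1.
pose h k := (\sum_(t <- take k F) gz ix jx t)%R.
have hstep : forall k, k < size F -> (1 <= h k.+1 - h k <= w%:Z + 1)%R.
  move=> k hk; rewrite /h (take_nth 0 hk) sum_rcons.
  have hin : nth 0 F k \in F by apply: mem_nth.
  have hp := allP hpos _ hin.
  have /and3P [hg1 _ _] := allP hall _ hin.
  have hL1 := pts_len (t := nth 0 F k) ltac:(move: hg1 hmu; clear; lia).
  have hL2 := pts_len (t := (nth 0 F k).+1) ltac:(move: hg1 hmu; clear; lia).
  move: hp hL1 hL2; rewrite /gz /w.
  move: (\sum_(t <- take k F) gz ix jx t)%R => S.
  move: (ix (nth 0 F k)) (jx (nth 0 F k)) (ix (nth 0 F k).+1) (jx (nth 0 F k).+1) => A B C D.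
  move: hab; clear; lia.
have [ks [e1 a1 s1 g1 b1]] := select_gen (w := w) (r := size F) (h := h) (ltn0Sn _) hstep erefl (leq0n _).
pose Pk k := [seq vtx X Y xt yt i | i <- zz ix jx mu 0 (take k F)].
have hPk : forall k, [&& is_path (Hadj e X Y) (Pk k), head xt (Pk k) == xt & last xt (Pk k) == yt] /\
    ((plen (Pk k))%:Z = (ix mu + jx mu + 1)%:Z + h k)%R.
  move=> k; apply: zz_path => //; first exact: take_sorted.
  by apply/allP => t /mem_take /(allP hall).
exists [seq Pk k | k <- ks]; split.
- rewrite size_map -nE_card.
  move: b1; rewrite /h take0 take_size big_nil.
  move: hbound; rewrite -/w.
  have -> : (8 * w * size ks = 8 * (w * size ks))%N by rewrite mulnA.
  have -> : (2 * w%:Z * (size ks)%:Z = 2 * (w * size ks)%N%:Z)%R by rewrite PoszM mulrA.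
  have hM : (w <= w * size ks)%N by rewrite leq_pmulr.
  move: hM; move: (\sum_(t <- F) gz ix jx t)%R (w * size ks)%N => S M.
  rewrite /w; move: hab; clear; lia.
- by move=> P /mapP [k _ ->]; have [] := hPk k.
- move=> i; rewrite size_map => hi.
  rewrite !(nth_map 0) //; last by move: hi; clear; lia.
  have [_ q1] := hPk (nth 0 ks i); have [_ q2] := hPk (nth 0 ks i.+1).
  have := g1 _ hi.
  move: q1 q2; move: (h (nth 0 ks i)) (h (nth 0 ks i.+1)) (plen (Pk (nth 0 ks i))) (plen (Pk (nth 0 ks i.+1))) => A B C D.
  rewrite /w; clear; lia.
Qed.

End Main.

Unset Implicit Arguments.
Local Open Scope ring_scope.

Theorem lemma4p7 (R : realType) :
  exists c c1 c2 : R, [/\ 0 < c, 0 < c1 & 0 < c2] /\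
  forall (T : finType) (e : rel T) (X Y : seq T),
    simple_graph e -> section_pair e X Y ->
    (* each vertex of X is incident to at most one chord *)
    (forall x, x \in X -> (#|[set y | chord e X Y (x, y)]| <= 1)%N) ->
    forall (E : {set T * T}) (a b : nat),
      (forall p, p \in E -> chord e X Y p) ->
      (a <= b)%N ->
      (* J = [a, b], |J| = b - a + 1 *)
      (forall p, p \in E -> (a <= chord_length X Y p <= b)%N) ->
      (* x^t and y^t: the tops (first vertices) of X and Y *)
      forall xt yt : T, head xt X = xt -> head yt Y = yt ->
      let Jsz := ((b - a).+1)%:R : R in
      exists Ps : seq (seq T),
        [/\ c * #|E|%:R / Jsz <= (size Ps)%:R,
            (forall P, P \in Ps ->
               [&& is_path (Hadj e X Y) P, head xt P == xt & last xt P == yt])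
          & (forall i, (i.+1 < size Ps)%N ->
               c1 * Jsz <= (plen (nth [::] Ps i.+1))%:R - (plen (nth [::] Ps i))%:R
                        <= c2 * Jsz)].
Proof.
exists (1 / 8), 1, 2; split; first by split; lra.
move=> T e X Y _ [pX [pY dj]] hone E a b hE hab hlen xt yt hxt hyt Jsz.
rewrite {}/Jsz.
have uX := is_path_uniq pX; have uY := is_path_uniq pY.
have dXY : forall x, x \in X -> x \notin Y by move=> x hx; rewrite (disjointFr dj hx).
have [Ps [hc hP hg]] := main_paths uX uY dXY hone hE hlen hxt hyt hab.
exists Ps; split => //.
- exact: real_count hc (ltn0Sn _).
- move=> i hi; exact: real_gap (hg i hi).
Qed.
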